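(* Let $(R,\omega_\Omega,\alpha)$ be a represented system for an arbitrary group $G$. Let $B$ be the set of all eigenoperators of $\alpha$ together with the zero operator, let $C$ be the $*$-algebra generated by $B$, and set $N:=C''$. Then $(N,\omega_\Omega,\alpha)$ is a compact factor of $(R,\omega_\Omega,\alpha)$; that is, $\alpha_g(N)\subset N$ for all $g\in G$, and for every $a\in N$ the orbit $\{\alpha_g(a):g\in G\}$ is totally bounded with respect to $\|\cdot\|_\Omega$.
   Context: A represented system $(R,\omega_\Omega,\alpha)$ consists of a von Neumann algebra $R$ on a Hilbert space $H$, a unit vector $\Omega\in H$ cyclic and separating for $R$, the state $\omega_\Omega(a)=\langle\Omega,a\Omega\rangle$ on $R$, and a unitary representation $g\mapsto U_g$ of a group $G$ on $H$ with $U_g\Omega=\Omega$ and $U_gRU_g^*\subset R$ for all $g$, with $\alpha_g(a):=U_gaU_g^*$. An eigenoperator of $\alpha$ is an $a\in R\setminus\{0\}$ for which there is a function $\lambda_a:G\to\mathbb{C}$ with $\alpha_g(a)=\lambda_a(g)a$ for all $g$. $\|a\|_\Omega:=\omega_\Omega(a^*a)^{1/2}=\|a\Omega\|$. $S'$ denotes the commutant of $S\subset B(H)$. A factor of $(R,\omega_\Omega,\alpha)$ consists of a $*$-subalgebra $N\subset R$ with $\alpha_g(N)\subset N$ for all $g$ together with the restrictions of $\omega_\Omega$ and $\alpha_g$. *)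

(* Defs.v *)
From HB Require Import structures.
From mathcomp Require Import all_boot all_order all_algebra.

From mathcomp Require Import reals.
From mathcomp Require Import complex.
From Stdlib Require Import ClassicalEpsilon.
Set Implicit Arguments. Unset Strict Implicit. Unset Printing Implicit Defensive.
Import Order.TTheory GRing.Theory Num.Theory.
Local Open Scope ring_scope.

(* Hilbert spaces are modelled as a
   left module H over R[i] together with an inner product ip, linear in the
   second and conjugate-linear in the first argument (physics convention,
   matching omega(a) = <Omega, a Omega>). *)
Section Hilbert.
Variables (R : realType) (H : lmodType R[i]) (ip : H -> H -> R[i]).

Definition cconj (z : R[i]) : R[i] := Complex (@complex.Re R z) (- @complex.Im R z).

Definition hnorm (x : H) : R := Num.sqrt (@complex.Re R (ip x x)).

Definition is_hilbert : Prop :=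
  [/\ (forall (a : R[i]) (x y z : H), ip x (a *: y + z) = a * ip x y + ip x z),
      (forall x y : H, ip y x = cconj (ip x y)),
      (forall x : H, 0 <= @complex.Re R (ip x x)),
      (forall x : H, ip x x = 0 -> x = 0) &
      (forall u : nat -> H,
        (forall e : R, 0 < e -> exists N : nat, forall m n : nat,
            (N <= m)%N -> (N <= n)%N -> hnorm (u m - u n) < e) ->
        exists l : H, forall e : R, 0 < e -> exists N : nat, forall n : nat,
            (N <= n)%N -> hnorm (u n - l) < e)].

Definition linop (T : H -> H) : Prop :=
  forall (a : R[i]) (x y : H), T (a *: x + y) = a *: T x + T y.

Definition bounded_op (T : H -> H) : Prop :=
  linop T /\ exists M : R, forall x : H, hnorm (T x) <= M * hnorm x.

Definition is_adjoint (T S : H -> H) : Prop :=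
  forall x y : H, ip (T x) y = ip x (S y).

(* The adjoint T^* (chosen by Hilbert's epsilon; unique for bounded T). *)
Definition adj (T : H -> H) : H -> H :=
  epsilon (inhabits T) (fun S => bounded_op S /\ is_adjoint T S).

Definition zero_op : H -> H := fun _ => 0.
Definition add_op (S T : H -> H) : H -> H := fun x => S x + T x.
Definition scale_op (c : R[i]) (T : H -> H) : H -> H := fun x => c *: T x.

Definition commutant (S : (H -> H) -> Prop) : (H -> H) -> Prop :=
  fun T => bounded_op T /\ forall s, S s -> T \o s = s \o T.

Definition star_subalg (S : (H -> H) -> Prop) : Prop :=
  [/\ (forall a, S a -> bounded_op a),
      S zero_op,
      (forall a b, S a -> S b -> S (add_op a b)),
      (forall c a, S a -> S (scale_op c a)) &
      (forall a b, S a -> S b -> S (a \o b))] /\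
      (forall a, S a -> S (adj a)).


Definition gen_star_alg (B : (H -> H) -> Prop) : (H -> H) -> Prop :=
  fun T => forall S, star_subalg S -> (forall b, B b -> S b) -> S T.

Definition von_neumann (M : (H -> H) -> Prop) : Prop :=
  (forall a, M a -> M (adj a)) /\ (forall T, M T <-> commutant (commutant M) T).

Definition unitary (U : H -> H) : Prop :=
  [/\ bounded_op U, (forall x y, ip (U x) (U y) = ip x y) & (forall y, exists x, U x = y)].

Variable G : groupType.

Definition alpha (U : G -> H -> H) (g : G) (a : H -> H) : H -> H :=
  U g \o a \o adj (U g).

Definition represented_system (M : (H -> H) -> Prop) (Omega : H) (U : G -> H -> H) : Prop :=
  [/\ is_hilbert, von_neumann M, hnorm Omega = 1,
      (forall (x : H) (e : R), 0 < e -> exists a, M a /\ hnorm (x - a Omega) < e) &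
      (forall a, M a -> a Omega = 0 -> a = zero_op)] /\
  [/\
      (forall g, unitary (U g)),
      (forall g h, U (g * h)%g = U g \o U h),
      U 1%g = id,
      (forall g, U g Omega = Omega) &
      (forall g a, M a -> M (alpha U g a))].

Definition eigenoperator (M : (H -> H) -> Prop) (U : G -> H -> H) (a : H -> H) : Prop :=
  M a /\ a <> zero_op /\
  exists lam : G -> R[i], forall g, alpha U g a = scale_op (lam g) a.

(* Orbit {alpha_g(a)} totally bounded for ||b||_Omega = ||b Omega||:
   for every e > 0 it is covered by finitely many e-balls centred on it. *)
Definition orbit_totally_bounded (U : G -> H -> H) (Omega : H) (a : H -> H) : Prop :=
  forall e : R, 0 < e -> exists s : seq G, forall g : G,
    exists h, List.In h s /\ hnorm (alpha U g a Omega - alpha U h a Omega) < e.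

End Hilbert.

(* Main.v *)
Require Import Defs.
From HB Require Import structures.
From mathcomp Require Import all_boot all_order all_algebra.
From mathcomp Require Import reals complex classical_sets boolp.
From mathcomp Require Import ring lra.
From Stdlib Require Import ClassicalEpsilon FunctionalExtensionality.
Import Order.TTheory GRing.Theory Num.Theory.
Local Open Scope ring_scope.
Local Open Scope complex_scope.

Section Hil.
Variables (R : realType) (H : lmodType R[i]) (ip : H -> H -> R[i]).
Hypothesis hH : is_hilbert ip.

Local Notation n := (hnorm ip).
Local Notation Re := (@complex.Re R).
Local Notation Im := (@complex.Im R).
Definition q (x : H) : R := Re (ip x x).

Lemma cconjE (z : R[i]) : cconj z = (z^*)%C.
Proof. by case: z. Qed.

Lemma ReM (a b : R[i]) : Re (a * b) = Re a * Re b - Im a * Im b.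
Proof. by case: a => a1 a2; case: b => b1 b2. Qed.
Lemma ImM (a b : R[i]) : Im (a * b) = Re a * Im b + Im a * Re b.
Proof. by case: a => a1 a2; case: b => b1 b2. Qed.
Lemma ReD (a b : R[i]) : Re (a + b) = Re a + Re b.
Proof. by case: a => a1 a2; case: b => b1 b2. Qed.
Lemma ImD (a b : R[i]) : Im (a + b) = Im a + Im b.
Proof. by case: a => a1 a2; case: b => b1 b2. Qed.
Lemma ReN (a : R[i]) : Re (- a) = - Re a.
Proof. by case: a. Qed.
Lemma ImN (a : R[i]) : Im (- a) = - Im a.
Proof. by case: a. Qed.
Lemma ReJ (a : R[i]) : Re (a^*)%C = Re a.
Proof. by case: a. Qed.
Lemma ImJ (a : R[i]) : Im (a^*)%C = - Im a.
Proof. by case: a. Qed.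
Lemma cplx_eq (a b : R[i]) : Re a = Re b -> Im a = Im b -> a = b.
Proof. by case: a => ??; case: b => ?? /= -> ->. Qed.
Lemma cjD (a b : R[i]) : (a + b)^*%C = a^*%C + b^*%C.
Proof. by case: a => ??; case: b => ??; rewrite /= opprD. Qed.
Lemma cjM (a b : R[i]) : (a * b)^*%C = a^*%C * b^*%C.
Proof. case: a => ??; case: b => ??; apply: cplx_eq => /=; ring. Qed.
Lemma cjN (a : R[i]) : (- a)^*%C = - a^*%C.
Proof. by case: a. Qed.
Lemma cjK (a : R[i]) : (a^*)^*%C = a.
Proof. by case: a => ??; rewrite /= opprK. Qed.
Lemma cj0 : (0 : R[i])^*%C = 0.
Proof. by apply: cplx_eq => /=; rewrite ?oppr0. Qed.
Lemma cj1 : (1 : R[i])^*%C = 1.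
Proof. by apply: cplx_eq => /=; rewrite ?oppr0. Qed.
Lemma ReC (a b : R) : Re (Complex a b) = a. Proof. by []. Qed.
Lemma ImC (a b : R) : Im (Complex a b) = b. Proof. by []. Qed.
Lemma Re0 : Re (0 : R[i]) = 0. Proof. by []. Qed.
Lemma Im0 : Im (0 : R[i]) = 0. Proof. by []. Qed.
Lemma Re1 : Re (1 : R[i]) = 1. Proof. by []. Qed.
Lemma Im1 : Im (1 : R[i]) = 0. Proof. by []. Qed.
Lemma ReR (r : R) : Re (r%:C) = r. Proof. by []. Qed.
Lemma ImR (r : R) : Im (r%:C) = 0. Proof. by []. Qed.


Lemma ip0r x : ip x 0 = 0.
Proof.
move: hH => [] ipl _ _ _ _.
have := ipl 1 x 0 0; rewrite scale1r addr0 mul1r => e.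
by apply: (addrI (ip x 0)); rewrite addr0 -e.
Qed.
Lemma ipDr x y z : ip x (y + z) = ip x y + ip x z.
Proof. by move: hH => []  ipl _ _ _ _; have := ipl 1 x y z; rewrite scale1r mul1r. Qed.
Lemma ipZr x a y : ip x (a *: y) = a * ip x y.
Proof. by move: hH => []  ipl _ _ _ _; have := ipl a x y 0; rewrite addr0 ip0r addr0. Qed.
Lemma ipC x y : ip y x = (ip x y)^*%C.
Proof. by move: hH => []  _ ipc _ _ _; rewrite ipc cconjE. Qed.
Lemma ipDl x y z : ip (x + y) z = ip x z + ip y z.
Proof. by rewrite ipC ipDr cjD -!ipC. Qed.
Lemma ipZl x a y : ip (a *: x) y = (a^*)%C * ip x y.
Proof. by rewrite ipC ipZr cjM -ipC. Qed.
Lemma ip0l x : ip 0 x = 0.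
Proof. by rewrite ipC ip0r cj0. Qed.
Lemma ipNr x y : ip x (- y) = - ip x y.
Proof. by rewrite -scaleN1r ipZr mulN1r. Qed.
Lemma ipNl x y : ip (- x) y = - ip x y.
Proof. by rewrite -scaleN1r ipZl cjN cj1 mulN1r. Qed.
Lemma ipBr x y z : ip x (y - z) = ip x y - ip x z.
Proof. by rewrite ipDr ipNr. Qed.
Lemma ipBl x y z : ip (x - y) z = ip x z - ip y z.
Proof. by rewrite ipDl ipNl. Qed.

Lemma ip_real x : ip x x = Complex (q x) 0.
Proof.
apply: cplx_eq => //=; have e := ipC x x.
have : Im (ip x x) = Im (ip x x)^*%C by rewrite -e.
rewrite ImJ => h; lra.
Qed.
Lemma q_ge0 x : 0 <= q x.
Proof. by move: hH => []  _ _ p _ _; exact: p. Qed.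
Lemma q_eq0 x : q x = 0 -> x = 0.
Proof. by move: hH => []  _ _ _ d _ h; apply: d; rewrite ip_real h. Qed.
Lemma ReipC x y : Re (ip y x) = Re (ip x y).
Proof. by rewrite ipC ReJ. Qed.
Lemma qD x y : q (x + y) = q x + 2 * Re (ip x y) + q y.
Proof. rewrite /q ipDl !ipDr !ReD (ReipC x y); ring. Qed.
Lemma qN x : q (- x) = q x.
Proof. by rewrite /q ipNl ipNr opprK. Qed.
Lemma qB x y : q (x - y) = q x - 2 * Re (ip x y) + q y.
Proof. by rewrite qD qN ipNr ReN; ring. Qed.
Lemma qZ a x : q (a *: x) = (Re a ^+ 2 + Im a ^+ 2) * q x.
Proof.
rewrite /q ipZl ipZr ip_real !ReM !ImM !ReJ !ImJ.
rewrite ReC ImC.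
move: (q x) (complex.Re a) (complex.Im a) => u v w. ring.
Qed.
Lemma Re_ipZr x a y : Re (ip x (a *: y)) = Re a * Re (ip x y) - Im a * Im (ip x y).
Proof. by rewrite ipZr ReM. Qed.

Lemma hnorm_ge0 x : 0 <= n x.
Proof. exact: sqrtr_ge0. Qed.
Lemma sqr_hnorm x : n x ^+ 2 = q x.
Proof. by rewrite sqr_sqrtr // q_ge0. Qed.
Lemma hnormE x : n x = Num.sqrt (q x).
Proof. by []. Qed.
Lemma hnorm_eq0 x : n x = 0 -> x = 0.
Proof. by move=> h; apply: q_eq0; rewrite -sqr_hnorm h expr0n. Qed.
Lemma hnorm0 : n 0 = 0.
Proof. by rewrite hnormE /q ip0r sqrtr0. Qed.
Lemma hnormN x : n (- x) = n x.
Proof. by rewrite !hnormE qN. Qed.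
Lemma hnormB x y : n (x - y) = n (y - x).
Proof. by rewrite -hnormN opprB. Qed.

Definition cm (a : R[i]) : R := Num.sqrt (Re a ^+ 2 + Im a ^+ 2).
Lemma hnormZ a x : n (a *: x) = cm a * n x.
Proof. by rewrite !hnormE qZ sqrtrM // addr_ge0 // sqr_ge0. Qed.
Lemma cm_ge0 a : 0 <= cm a. Proof. exact: sqrtr_ge0. Qed.
Lemma cm_le a : cm a <= `|Re a| + `|Im a|.
Proof.
rewrite /cm -(@ler_pXn2r _ 2) ?nnegrE ?sqrtr_ge0 ?addr_ge0 //.
rewrite sqr_sqrtr ?addr_ge0 ?sqr_ge0 //.
move: (Re a) (Im a) => u v.
rewrite sqrrD !real_normK ?num_real //.
have hu := normr_ge0 u; have hv := normr_ge0 v.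
move: hu hv; move: `|u| `|v| (u ^+ 2) (v ^+ 2) => U V A B hU hV.
have : 0 <= U * V *+ 2 by rewrite mulrn_wge0 // mulr_ge0.
lra.
Qed.
Lemma cmR (r : R) : cm r%:C = `|r|.
Proof. by rewrite /cm ReR ImR expr0n addr0 sqrtr_sqr. Qed.

Lemma CS x y : Re (ip x y) <= n x * n y.
Proof.
have [y0|ny] := eqVneq (q y) 0.
  by rewrite (q_eq0 _ y0) ip0r Re0 mulr_ge0 // hnorm_ge0.
have qy : 0 < q y by rewrite lt_neqAle eq_sym ny q_ge0.
have h : 0 <= q x * q y - (Re (ip x y)) ^+ 2.
  have := q_ge0 (x - (Re (ip x y) / q y)%:C *: y).
  rewrite qB qZ ReR ImR Re_ipZr ReR ImR.
  move: ny qy; move: (q x) (q y) (Re (ip x y)) (Im (ip x y)) => X Q c d ny qy h.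
  have e : (X - 2 * (c / Q * c - 0 * d) + ((c / Q) ^+ 2 + 0 ^+ 2) * Q) * Q = X * Q - c ^+ 2.
    by field.
  by rewrite -e mulr_ge0 // ltW.
have [c0|c0] := lerP (Re (ip x y)) 0; first by apply: le_trans c0 _; rewrite mulr_ge0 // hnorm_ge0.
have -> : n x * n y = Num.sqrt (q x * q y) by rewrite !hnormE sqrtrM ?q_ge0.
rewrite -(ger0_norm (ltW c0)) -sqrtr_sqr ler_wsqrtr //.
by rewrite -subr_ge0.
Qed.
Lemma CSabs x y : `|Re (ip x y)| <= n x * n y.
Proof.
rewrite ler_norml CS andbT lerNl -ReN -ipNr.
by rewrite -[X in _ <= _ * X]hnormN CS.
Qed.
Lemma hnormD x y : n (x + y) <= n x + n y.
Proof.
rewrite -(@ler_pXn2r _ 2) ?nnegrE ?hnorm_ge0 ?addr_ge0 ?hnorm_ge0 //.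
rewrite sqr_hnorm qD sqrrD !sqr_hnorm.
have := CS x y; lra.
Qed.
Lemma hnormDB x y z : n (x - z) <= n (x - y) + n (y - z).
Proof. by rewrite -[x - z](subrKA y) hnormD. Qed.

Lemma hnorm_lt x e : 0 < e -> q x < e ^+ 2 -> n x < e.
Proof.
move=> e0 h; rewrite hnormE -(ger0_norm (ltW e0)) -sqrtr_sqr ltr_sqrt //.
by rewrite exprn_gt0.
Qed.
Lemma q_hnorm x : q x = n x ^+ 2.
Proof. by rewrite sqr_hnorm. Qed.

Lemma sq_le (a b : R) : 0 <= a -> a <= b -> a ^+ 2 <= b ^+ 2.
Proof. by move=> a0 ab; rewrite ler_pXn2r ?nnegrE // (le_trans a0). Qed.

Lemma archi_inv (d : R) : 0 < d -> exists N : nat, forall k, (N <= k)%N -> (k.+1%:R)^-1 < d.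
Proof.
move=> d0; exists (Num.Def.archi_bound d^-1) => k hk.
have hd : 0 <= d^-1 by rewrite invr_ge0 ltW.
have h := archi_boundP hd.
rewrite invf_plt ?posrE ?ltr0Sn //; apply: (lt_le_trans h).
by rewrite ler_nat; apply: leq_trans hk _.
Qed.

Lemma choice_nat (P : nat -> H -> Prop) : (forall k, exists v, P k v) -> exists u : nat -> H, forall k, P k (u k).
Proof.
move=> h; exists (fun k => proj1_sig (constructive_indefinite_description _ (h k))).
by move=> k; case: (constructive_indefinite_description _ (h k)).
Qed.

Definition closed_sub (V : H -> Prop) : Prop :=
  [/\ V 0, (forall x y, V x -> V y -> V (x + y)), (forall a x, V x -> V (a *: x)) &
      (forall (u : nat -> H) x, (forall k, V (u k)) ->
         (forall e, 0 < e -> exists N, forall k, (N <= k)%N -> n (u k - x) < e) -> V x)].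

Lemma complete_seq (u : nat -> H) :
  (forall e : R, 0 < e -> exists N : nat, forall m k : nat, (N <= m)%N -> (N <= k)%N -> n (u m - u k) < e) ->
  exists l : H, forall e : R, 0 < e -> exists N : nat, forall k : nat, (N <= k)%N -> n (u k - l) < e.
Proof. by move: hH => [] _ _ _ _ c; exact: c. Qed.

Lemma qscale2 z : q ((2 : R[i]) *: z) = 4 * q z.
Proof. rewrite qZ /=. move: (q z) => Q. ring. Qed.

Lemma real_orth (z v : H) : (forall t : R, q z <= q (z - t%:C *: v)) -> Re (ip z v) = 0.
Proof.
move=> h; have := h (Re (ip z v) / (q v + 1)).
rewrite qB qZ Re_ipZr ReR ImR.
have qv := q_ge0 v; move: qv; move: (q z) (q v) (Re (ip z v)) (Im (ip z v)) => Z Q c d qv.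
set t := c / (Q + 1) => ht.
have hq : 0 < Q + 1 by lra.
have e1 : t * (Q + 1) = c by rewrite /t mulfVK // gt_eqF.
have : 0 <= t * (t * Q - 2 * c) by nra.
have e2 : t * (t * Q - 2 * c) * (Q + 1) ^+ 2 = c ^+ 2 * (- Q - 2).
  by rewrite /t; field; rewrite gt_eqF.
move=> h2; have : 0 <= c ^+ 2 * (- Q - 2) by rewrite -e2 mulr_ge0 // sqr_ge0.
move=> h3; have : c ^+ 2 <= 0 by nra.
by move=> h4; apply/eqP; rewrite -sqrf_eq0 eq_le h4 sqr_ge0.
Qed.

Lemma proj_ex V : closed_sub V -> forall x, exists p, V p /\ forall v, V v -> ip v (x - p) = 0.
Proof.
move=> [V0 VD VZ Vc] x.
pose E : set R := fun r => exists v, V v /\ r = n (x - v).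
have hinf : has_inf E.
  split; first by exists (n (x - 0)); exists 0.
  by exists 0 => r [v [_ ->]]; exact: hnorm_ge0.
set d := inf E.
have d0 : 0 <= d.
  apply: lb_le_inf; first by exists (n (x - 0)); exists 0.
  by move=> r [v [_ ->]]; exact: hnorm_ge0.
have dle : forall v, V v -> d <= n (x - v).
  by move=> v Vv; apply: (ge_inf hinf.2); exists v.
have : forall k, exists v, V v /\ n (x - v) < d + (k.+1%:R)^-1.
  move=> k; have ek : 0 < (k.+1%:R : R)^-1 by rewrite invr_gt0 ltr0Sn.
  have [r [v [Vv ->]] hr] := inf_adherent ek hinf.
  by exists v.
case/choice_nat=> u hu.
pose e (k : nat) : R := (k.+1%:R)^-1.
have e0 : forall k, 0 < e k by move=> k; rewrite invr_gt0 ltr0Sn.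
have e1 : forall k, e k <= 1 by move=> k; rewrite invf_le1 ?ltr0Sn // ler1n.
have emon : forall k m, (k <= m)%N -> e m <= e k.
  by move=> k m km; rewrite lef_pV2 ?posrE ?ltr0Sn // ler_nat.
(* parallelogram bound *)
have par : forall k m, q (u m - u k) <= (4 * d + 2) * (e k + e m).
  move=> k m.
  have [Vk hk] := hu k; have [Vm hm] := hu m.
  set a := x - u k; set b := x - u m.
  pose w := ((2 : R[i])^-1) *: (u k + u m).
  have Vw : V w by apply: VZ; apply: VD.
  have hab : a + b = (2 : R[i]) *: (x - w).
    rewrite /a /b /w scalerBr scalerA mulfV; last by rewrite pnatr_eq0.
    by rewrite scale1r scaler_nat mulr2n; rewrite opprD !addrA; congr (_ - _); rewrite addrAC.
  have hpar : q (u m - u k) + q (a + b) = 2 * q a + 2 * q b.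
    have -> : u m - u k = a - b by rewrite /a /b opprB [RHS]addrC addrA subrK.
    rewrite (qB a b) (qD a b); move: (q a) (q b) (Re (ip a b)) => A B C; ring.
  rewrite hab qscale2 in hpar.
  have hw := dle _ Vw.
  have qw : d ^+ 2 <= q (x - w) by rewrite q_hnorm; apply: sq_le.
  have qa : q a <= (d + e k) ^+ 2.
    by rewrite q_hnorm; apply: sq_le; [exact: hnorm_ge0|exact: ltW].
  have qb : q b <= (d + e m) ^+ 2.
    by rewrite q_hnorm; apply: sq_le; [exact: hnorm_ge0|exact: ltW].
  have ek := e0 k; have em := e0 m; have ek1 := e1 k; have em1 := e1 m.
  move: hpar qw qa qb ek em ek1 em1.
  move: (q (u m - u k)) (q (x - w)) (q a) (q b) (e k) (e m) => Q W A B E1 E2.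
  nra.
have cau : forall eps : R, 0 < eps -> exists N : nat, forall m k : nat, (N <= m)%N -> (N <= k)%N -> n (u m - u k) < eps.
  move=> eps eps0.
  have c0 : 0 < (eps ^+ 2) / (2 * (4 * d + 2)).
    by rewrite divr_gt0 ?exprn_gt0 // mulr_gt0 //; lra.
  have [N hN] := archi_inv _ c0.
  exists N => m k hm hk; apply: hnorm_lt => //.
  apply: (le_lt_trans (par k m)).
  have hk' := emon _ _ hk; have hm' := emon _ _ hm.
  have hNN := hN N (leqnn N).
  have : (4 * d + 2) * (e k + e m) <= (4 * d + 2) * (2 * e N).
    by rewrite ler_wpM2l //; lra.
  have : (4 * d + 2) * (2 * e N) < eps ^+ 2.
    have p0 : 0 < 2 * (4 * d + 2) by lra.
    move: hNN; rewrite ltr_pdivlMr // => hh.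
    move: hh; rewrite -/(e N); move: (e N) (d) => EE DD hh.
    by rewrite (_ : (4 * DD + 2) * (2 * EE) = EE * (2 * (4 * DD + 2))) //; ring.
  lra.
have [p hp] := complete_seq _ cau.
have Vp : V p by apply: (Vc u) => // k; case: (hu k).
exists p; split=> //.
have np : n (x - p) <= d.
  apply/ler_addgt0Pr => eps eps0.
  have [N1 hN1] := hp _ (divr_gt0 eps0 (ltr0Sn R 1)).
  have [N2 hN2] := archi_inv _ (divr_gt0 eps0 (ltr0Sn R 1)).
  pose k := maxn N1 N2.
  have h1 := hN1 k (leq_maxl _ _); have h2 := hN2 k (leq_maxr _ _).
  have [_ h3] := hu k.
  have := hnormDB (x) (u k) p.
  move: h1 h2 h3; rewrite -/(e k).
  move: (n (x - p)) (n (x - u k)) (n (u k - p)) (e k) => A B C EE.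
  lra.
have minp : forall v, V v -> forall t : R, q (x - p) <= q ((x - p) - t%:C *: v).
  move=> v Vv t.
  have : V (p + t%:C *: v) by apply: VD => //; apply: VZ.
  move/dle; rewrite opprD addrA => h.
  rewrite !q_hnorm ler_pXn2r ?nnegrE ?hnorm_ge0 //.
  exact: le_trans np h.
move=> v Vv.
have r1 := real_orth _ _ (minp v Vv).
have r2 := real_orth _ _ (minp _ (VZ 'i v Vv)).
rewrite Re_ipZr /= in r2.
rewrite ipC; apply: cplx_eq.
  by rewrite ReJ r1.
by rewrite ImJ; move: r2; rewrite !mul0r !mul1r sub0r => /eqP; rewrite oppr_eq0 => /eqP ->; rewrite oppr0.
Qed.

Lemma choice_fun (A B : Type) (P : A -> B -> Prop) :
  (forall a, exists b, P a b) -> exists f : A -> B, forall a, P a (f a).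
Proof.
move=> h; exists (fun a => proj1_sig (constructive_indefinite_description _ (h a))).
by move=> a; case: (constructive_indefinite_description _ (h a)).
Qed.

Lemma ip_inj_l w w' : (forall x, ip w x = ip w' x) -> w = w'.
Proof.
move=> h; apply/eqP; rewrite -subr_eq0; apply/eqP; apply: q_eq0.
by rewrite /q ipBl h subrr Re0.
Qed.
Lemma ip_inj_r w w' : (forall x, ip x w = ip x w') -> w = w'.
Proof. by move=> h; apply: ip_inj_l => x; rewrite ipC h -ipC. Qed.

Section Lin.
Variable T : H -> H.
Hypothesis lT : linop T.
Lemma lin0 : T 0 = 0.
Proof.
have := lT 1 0 0; rewrite !scale1r addr0 => e.
by apply: (addrI (T 0)); rewrite addr0 -e.
Qed.
Lemma linD x y : T (x + y) = T x + T y.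
Proof. by have := lT 1 x y; rewrite !scale1r. Qed.
Lemma linZ a x : T (a *: x) = a *: T x.
Proof. by have := lT a x 0; rewrite !addr0 lin0 addr0. Qed.
Lemma linN x : T (- x) = - T x.
Proof. by rewrite -scaleN1r linZ scaleN1r. Qed.
Lemma linB x y : T (x - y) = T x - T y.
Proof. by rewrite linD linN. Qed.
End Lin.
Arguments lin0 {T}.
Arguments linD {T}.
Arguments linZ {T}.
Arguments linN {T}.
Arguments linB {T}.

Lemma bounded_pos {T} : bounded_op ip T -> exists K, 0 <= K /\ forall x, n (T x) <= K * n x.
Proof.
move=> [_ [M hM]]; exists `|M|; split=> // x.
by apply: (le_trans (hM x)); rewrite ler_wpM2r ?hnorm_ge0 // ler_norm.
Qed.

Lemma re_lim (f : H -> R[i]) K (u : nat -> H) x :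
  (forall a x y, f (a *: x + y) = a * f x + f y) -> (forall x, `|Re (f x)| <= K * n x) ->
  (forall k, f (u k) = 0) ->
  (forall e, 0 < e -> exists N, forall k, (N <= k)%N -> n (u k - x) < e) -> Re (f x) = 0.
Proof.
move=> fl fb fu cu.
have f0 : f 0 = 0.
  have := fl 1 0 0; rewrite scale1r addr0 mul1r => e.
  by apply: (addrI (f 0)); rewrite addr0 -e.
have fD : forall x y, f (x + y) = f x + f y by move=> x0 y0; have := fl 1 x0 y0; rewrite scale1r mul1r.
have fN : forall x, f (- x) = - f x.
  by move=> x0; have := fl (-1) x0 0; rewrite addr0 f0 addr0 scaleN1r mulN1r.
apply/eqP; rewrite -normr_le0; apply/ler_addgt0Pr => e e0; rewrite add0r.
have hk1 : 0 < `|K| + 1 by have := normr_ge0 K; move: `|K| => kk; lra.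
have d0 : 0 < e / (`|K| + 1) by rewrite divr_gt0.
have [N hN] := cu _ d0.
have h := hN N (leqnn N).
have : Re (f x) = - Re (f (u N - x)) by rewrite fD fN fu add0r ReN opprK.
move=> ->; rewrite normrN; apply: (le_trans (fb _)).
have hK : K * n (u N - x) <= `|K| * n (u N - x) by rewrite ler_wpM2r ?hnorm_ge0 ?ler_norm.
apply: (le_trans hK).
have : `|K| * n (u N - x) <= `|K| * (e / (`|K| + 1)) by rewrite ler_wpM2l // ltW.
move/le_trans; apply.
have k0 := normr_ge0 K.
rewrite mulrA ler_pdivrMr //.
rewrite mulrC ler_wpM2l ?ltW //; move: `|K| => kk; lra.
Qed.

Lemma riesz {f : H -> R[i]} {K} :
  (forall a x y, f (a *: x + y) = a * f x + f y) -> (forall x, `|Re (f x)| <= K * n x) ->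
  exists z, forall x, f x = ip z x.
Proof.
move=> fl fb.
have f0 : f 0 = 0.
  have := fl 1 0 0; rewrite scale1r addr0 mul1r => e.
  by apply: (addrI (f 0)); rewrite addr0 -e.
have fD : forall x y, f (x + y) = f x + f y by move=> x0 y0; have := fl 1 x0 y0; rewrite scale1r mul1r.
have fZ : forall a x, f (a *: x) = a * f x by move=> a x0; have := fl a x0 0; rewrite addr0 f0 addr0.
have fN : forall x, f (- x) = - f x by move=> x0; rewrite -scaleN1r fZ mulN1r.
have fi : forall x, Re (f ('i *: x)) = - Im (f x) by move=> x0; rewrite fZ ReM /=; ring.
pose Kf := fun x => f x = 0.
have cK : closed_sub Kf.
  split.
  - exact: f0.
  - by move=> x y; rewrite /Kf fD => -> ->; rewrite addr0.
  - by move=> a x; rewrite /Kf fZ => ->; rewrite mulr0.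
  move=> u x hu cu; rewrite /Kf.
  have r1 := re_lim _ _ _ _ fl fb hu cu.
  have r2 : Re (f ('i *: x)) = 0.
    apply: (@re_lim f K (fun k => 'i *: u k) ('i *: x) fl fb).
      by move=> k; rewrite fZ hu mulr0.
    move=> e e0; have [N hN] := cu e e0; exists N => k hk.
    by rewrite -scalerBr hnormZ /cm /= expr0n expr1n add0r sqrtr1 mul1r hN.
  rewrite fi in r2; apply: cplx_eq => //=.
  by move/eqP: r2; rewrite oppr_eq0 => /eqP.
have [allz|] := pselect (forall x, f x = 0).
  by exists 0 => x; rewrite allz ip0l.
move=> /existsNP [x0 hx0].
have [p [Kp orth]] := proj_ex _ cK x0.
set u := x0 - p.
have fu : f u = f x0 by rewrite /u fD fN Kp oppr0 addr0.
have u0 : u != 0 by apply/eqP => e; apply: hx0; rewrite -fu e f0.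
have iuu : ip u u != 0.
  apply/eqP => e; move/eqP: u0; apply; apply: q_eq0; by rewrite /q e.
exists (((f u) / ip u u)^*%C *: u) => x.
have w0 : Kf (f u *: x - f x *: u) by rewrite /Kf fD fN !fZ mulrC subrr.
have h0 := orth _ w0.
have e0 : ip u (f u *: x - f x *: u) = 0 by rewrite ipC h0 cj0.
move: e0; rewrite ipBr !ipZr => /eqP; rewrite subr_eq0 => /eqP e.
rewrite ipZl cjK.
apply: (mulIf iuu); rewrite -e mulrAC; by field.
Qed.

Lemma adj_ex {T} : bounded_op ip T -> exists S, bounded_op ip S /\ is_adjoint ip T S.
Proof.
move=> bT; have [K [K0 hK]] := bounded_pos bT.
have lT := bT.1.
have : forall y, exists z, forall x, ip y (T x) = ip z x.
  move=> y; apply: (riesz (K := n y * K)).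
    by move=> a x x'; rewrite (lT a x x') ipDr ipZr.
  move=> x; apply: (le_trans (CSabs _ _)); rewrite -mulrA ler_wpM2l ?hnorm_ge0 //.
case/choice_fun => S hS.
have adjS : is_adjoint ip T S by move=> x y; rewrite ipC hS -ipC.
exists S; split=> //; split.
  move=> a y y'; apply: ip_inj_l => x.
  by rewrite -hS ipDl ipZl ipDl ipZl -!hS.
exists K => y.
have h : q (S y) <= n y * (K * n (S y)).
  rewrite /q -hS; apply: (le_trans (ler_norm _)); apply: (le_trans (CSabs _ _)).
  by rewrite ler_wpM2l ?hnorm_ge0.
move: h; rewrite q_hnorm; have := hnorm_ge0 (S y); have := hnorm_ge0 y.
move: (n (S y)) (n y) => A B hB hA h.
have : 0 <= K * B by rewrite mulr_ge0.
nra.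
Qed.

Lemma adj_spec {T} : bounded_op ip T -> bounded_op ip (adj ip T) /\ is_adjoint ip T (adj ip T).
Proof.
move=> bT; rewrite /adj; apply: (epsilon_spec (inhabits T) (fun S => bounded_op ip S /\ is_adjoint ip T S)).
exact: adj_ex.
Qed.

Lemma funE (f g : H -> H) : (forall x, f x = g x) -> f = g.
Proof. exact: functional_extensionality. Qed.

Lemma bounded_lin {T} : bounded_op ip T -> linop T.
Proof. by case. Qed.

Lemma bounded_zero : bounded_op ip (@zero_op R H).
Proof.
split; first by move=> a x y; rewrite /zero_op scaler0 addr0.
by exists 0 => x; rewrite /zero_op hnorm0 mul0r.
Qed.
Lemma bounded_id : bounded_op ip id.
Proof. by split=> //; exists 1 => x; rewrite mul1r. Qed.
Lemma bounded_add {a b} : bounded_op ip a -> bounded_op ip b -> bounded_op ip (add_op a b).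
Proof.
move=> ba bb; have [Ka [Ka0 hKa]] := bounded_pos ba; have [Kb [Kb0 hKb]] := bounded_pos bb.
split.
  move=> c x y; rewrite /add_op (bounded_lin ba) (bounded_lin bb) scalerDr.
  by rewrite -!addrA; congr (_ + _); rewrite addrCA.
exists (Ka + Kb) => x; rewrite /add_op mulrDl.
by apply: (le_trans (hnormD _ _)); apply: lerD.
Qed.
Lemma bounded_scale c {a} : bounded_op ip a -> bounded_op ip (scale_op c a).
Proof.
move=> ba; have [Ka [Ka0 hKa]] := bounded_pos ba.
split.
  by move=> d x y; rewrite /scale_op (bounded_lin ba) scalerDr !scalerA mulrC.
exists (cm c * Ka) => x; rewrite /scale_op hnormZ -mulrA ler_wpM2l ?cm_ge0 //.
Qed.
Lemma bounded_comp {a b} : bounded_op ip a -> bounded_op ip b -> bounded_op ip (a \o b).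
Proof.
move=> ba bb; have [Ka [Ka0 hKa]] := bounded_pos ba; have [Kb [Kb0 hKb]] := bounded_pos bb.
split; first by move=> c x y; rewrite /= (bounded_lin bb) (bounded_lin ba).
exists (Ka * Kb) => x /=; apply: (le_trans (hKa _)); rewrite -mulrA ler_wpM2l //.
Qed.

Lemma adj_bounded {T} : bounded_op ip T -> bounded_op ip (adj ip T).
Proof. by move/adj_spec => []. Qed.
Lemma adjP {T} : bounded_op ip T -> forall x y, ip (T x) y = ip x (adj ip T y).
Proof. by move/adj_spec => [] _. Qed.
Lemma adjP' {T} : bounded_op ip T -> forall x y, ip (adj ip T x) y = ip x (T y).
Proof. by move=> bT x y; rewrite ipC -adjP // -ipC. Qed.
Lemma adj_unique {T S} : bounded_op ip T -> is_adjoint ip T S -> adj ip T = S.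
Proof.
move=> bT hS; apply: funE => y; apply: ip_inj_r => x.
by rewrite -adjP // hS.
Qed.
Lemma adj_adj {T} : bounded_op ip T -> adj ip (adj ip T) = T.
Proof. by move=> bT; apply: adj_unique; [exact: adj_bounded|exact: adjP']. Qed.
Lemma adj_comp {a b} : bounded_op ip a -> bounded_op ip b -> adj ip (a \o b) = adj ip b \o adj ip a.
Proof.
move=> ba bb; apply: adj_unique; first exact: bounded_comp.
by move=> x y /=; rewrite adjP // adjP.
Qed.
Lemma adj_zero : adj ip (@zero_op R H) = @zero_op R H.
Proof.
by apply: adj_unique; [exact: bounded_zero|move=> x y; rewrite /zero_op ip0l ip0r].
Qed.
Lemma adj_add {a b} : bounded_op ip a -> bounded_op ip b -> adj ip (add_op a b) = add_op (adj ip a) (adj ip b).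
Proof.
move=> ba bb; apply: adj_unique; first exact: bounded_add.
by move=> x y; rewrite /add_op ipDl ipDr !adjP.
Qed.
Lemma adj_scale c {a} : bounded_op ip a -> adj ip (scale_op c a) = scale_op (c^*)%C (adj ip a).
Proof.
move=> ba; apply: adj_unique; first exact: bounded_scale.
by move=> x y; rewrite /scale_op ipZl ipZr adjP.
Qed.

Section Comm.
Variable S : (H -> H) -> Prop.
Hypothesis hS : forall s, S s -> bounded_op ip s.
Lemma commP {a} : commutant ip S a -> forall s, S s -> forall x, a (s x) = s (a x).
Proof. by move=> [_ h] s Ss x; rewrite -[a (s x)]/((a \o s) x) (h s Ss). Qed.
Lemma comm_zero : commutant ip S (@zero_op R H).
Proof.
split; first exact: bounded_zero.
move=> s Ss; apply: funE => x; rewrite /zero_op /=.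
by rewrite (lin0 (bounded_lin (hS _ Ss))).
Qed.
Lemma comm_add {a b} : commutant ip S a -> commutant ip S b -> commutant ip S (add_op a b).
Proof.
move=> ca cb; split; first by apply: bounded_add; [exact: ca.1|exact: cb.1].
move=> s Ss; apply: funE => x; rewrite /add_op /= (commP ca) // (commP cb) //.
by rewrite (linD (bounded_lin (hS _ Ss))).
Qed.
Lemma comm_scale c {a} : commutant ip S a -> commutant ip S (scale_op c a).
Proof.
move=> ca; split; first by apply: bounded_scale; exact: ca.1.
move=> s Ss; apply: funE => x; rewrite /scale_op /= (commP ca) //.
by rewrite (linZ (bounded_lin (hS _ Ss))).
Qed.
Lemma comm_comp {a b} : commutant ip S a -> commutant ip S b -> commutant ip S (a \o b).
Proof.
move=> ca cb; split; first by apply: bounded_comp; [exact: ca.1|exact: cb.1].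
by move=> s Ss; apply: funE => x /=; rewrite (commP cb) // (commP ca).
Qed.
Hypothesis hSadj : forall s, S s -> S (adj ip s).
Lemma comm_adj {a} : commutant ip S a -> commutant ip S (adj ip a).
Proof.
move=> ca; have ba := ca.1; split; first exact: adj_bounded.
move=> s Ss; have bs := hS _ Ss; have bs' := hS _ (hSadj _ Ss).
have e : a \o adj ip s = adj ip s \o a by exact: (ca.2 _ (hSadj _ Ss)).
have := congr1 (adj ip) e.
rewrite (adj_comp ba bs') (adj_comp bs' ba) (adj_adj bs) => e'.
by rewrite e'.
Qed.
End Comm.
Arguments commP {S a}.

Lemma comm_bounded S {a} : commutant ip S a -> bounded_op ip a.
Proof. by case. Qed.

Lemma bicomm_star S : (forall s, S s -> bounded_op ip s) -> (forall s, S s -> S (adj ip s)) ->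
  star_subalg ip (commutant ip (commutant ip S)).
Proof.
move=> hS hSa.
have h1 : forall s, commutant ip S s -> bounded_op ip s by move=> s [].
have h2 : forall s, commutant ip S s -> commutant ip S (adj ip s) by move=> s; exact: comm_adj.
split; last by move=> a; exact: comm_adj.
split.
- by move=> a [].
- exact: comm_zero.
- by move=> a b; exact: comm_add.
- by move=> c a; exact: comm_scale.
- by move=> a b; exact: comm_comp.
Qed.

Lemma hnormZle a x : n (a *: x) <= (`|Re a| + `|Im a|) * n x.
Proof. by rewrite hnormZ ler_wpM2r ?hnorm_ge0 ?cm_le. Qed.

Definition netb (S : H -> Prop) : Prop :=
  forall e : R, 0 < e -> exists L : seq H, forall x, S x -> exists l, List.In l L /\ n (x - l) < e.

Lemma grid_real {d : R} : 0 < d -> exists L : seq R, forall t, `|t| <= 1 -> exists r, List.In r L /\ `|t - r| <= d.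
Proof.
move=> d0.
have claim : forall N : nat, exists L : seq R, forall t, -1 <= t -> t <= -1 + N%:R * d ->
    exists r, List.In r L /\ `|t - r| <= d.
  elim=> [|N [L hL]].
    exists [:: -1] => t h1 h2; exists (-1); split; first by left.
    have -> : t = -1 by apply/eqP; rewrite eq_le h1 andbT; move: h2; rewrite mul0r addr0.
    by rewrite subrr normr0 ltW.
  exists ((-1 + N.+1%:R * d) :: L) => t h1 h2.
  have [hle|hlt] := lerP t (-1 + N%:R * d).
    by have [r [Ir hr]] := hL t h1 hle; exists r; split => //; right.
  exists (-1 + N.+1%:R * d); split; first by left.
  move: h2 hlt; rewrite -natr1 mulrDl mul1r.
  move: (N%:R * d) => A h2 hlt.
  rewrite ler_norml; apply/andP; split; lra.
have d1 : 0 < 2 / d by rewrite divr_gt0.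
have hb : 0 <= 2 / d by rewrite ltW.
have [L hL] := claim (Num.Def.archi_bound (2 / d)).
exists L => t ht; apply: hL.
  by move: ht; rewrite ler_norml => /andP [].
have h := archi_boundP hb.
have : 2 <= (Num.Def.archi_bound (2 / d))%:R * d.
  by rewrite -ler_pdivrMr // ltW.
move: ht; rewrite ler_norml => /andP [_ ht].
move: ((Num.Def.archi_bound (2 / d))%:R * d) => A hA; lra.
Qed.

Lemma grid_cplx {d : R} : 0 < d -> exists L : seq R[i], forall mu : R[i], `|Re mu| <= 1 -> `|Im mu| <= 1 ->
  exists nu, List.In nu L /\ `|Re (mu - nu)| <= d /\ `|Im (mu - nu)| <= d.
Proof.
move=> d0; have [L hL] := grid_real d0.
exists (List.flat_map (fun a => List.map (fun b => Complex a b) L) L) => mu h1 h2.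
have [a [Ia ha]] := hL _ h1; have [b [Ib hb]] := hL _ h2.
exists (Complex a b); split.
  apply/List.in_flat_map; exists a; split => //; apply/List.in_map_iff; by exists b.
by rewrite ReD ImD ReN ImN.
Qed.

Section Orb.
Variables (G : groupType) (U : G -> H -> H).
Hypothesis hU : forall g, unitary ip (U g).

Lemma U_bounded g : bounded_op ip (U g).
Proof. by case: (hU g). Qed.
Lemma hnormU g x : n (U g x) = n x.
Proof. by case: (hU g) => _ h _; rewrite !hnormE /q h. Qed.

Definition orbV (x : H) : Prop := netb (fun y => exists g, y = U g x).

Lemma orbV0 : orbV 0.
Proof.
move=> e e0; exists [:: 0] => y [g ->]; exists 0; split; first by left.
by rewrite (lin0 (bounded_lin (U_bounded g))) subrr hnorm0.
Qed.

Lemma orbV_add x y : orbV x -> orbV y -> orbV (x + y).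
Proof.
move=> hx hy e e0.
have e2 : 0 < e / 2 by rewrite divr_gt0.
have [L1 h1] := hx _ e2; have [L2 h2] := hy _ e2.
exists (List.flat_map (fun a => List.map (fun b => a + b) L2) L1) => z [g ->].
have [a [Ia ha]] := h1 (U g x) (ex_intro _ g erefl).
have [b [Ib hb]] := h2 (U g y) (ex_intro _ g erefl).
exists (a + b); split.
  by apply/List.in_flat_map; exists a; split => //; apply/List.in_map_iff; exists b.
rewrite (linD (bounded_lin (U_bounded g))).
have -> : U g x + U g y - (a + b) = (U g x - a) + (U g y - b).
  by rewrite opprD addrACA.
apply: (le_lt_trans (hnormD _ _)).
move: ha hb; move: (n (U g x - a)) (n (U g y - b)) => A B; lra.
Qed.

Lemma orbV_closed (u : nat -> H) x : (forall k, orbV (u k)) ->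
  (forall e, 0 < e -> exists N, forall k, (N <= k)%N -> n (u k - x) < e) -> orbV x.
Proof.
move=> hu cu e e0.
have e2 : 0 < e / 2 by rewrite divr_gt0.
have [N hN] := cu _ e2; have hNN := hN N (leqnn N).
have [L hL] := hu N _ e2.
exists L => z [g ->].
have [l [Il hl]] := hL (U g (u N)) (ex_intro _ g erefl).
exists l; split => //.
apply: (le_lt_trans (hnormDB _ (U g (u N)) _)).
rewrite -(linB (bounded_lin (U_bounded g))) hnormU hnormB.
move: hNN hl; move: (n (u N - x)) (n (U g (u N) - l)) => A B; lra.
Qed.

Lemma small_param {e A : R} : 0 < e -> 0 <= A ->
  0 < e / (A + e + 1) /\ e / (A + e + 1) <= 1 /\ e / (A + e + 1) * A < e.
Proof.
move=> e0 A0; have p : 0 < A + e + 1 by lra.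
split; first by rewrite divr_gt0.
split; first by rewrite ler_pdivrMr // mul1r; lra.
rewrite mulrAC ltr_pdivrMr // ltr_pM2l //; lra.
Qed.

Lemma orbV_phase (c : H -> H) (mu : G -> R[i]) : bounded_op ip c ->
  (forall g, `|Re (mu g)| <= 1 /\ `|Im (mu g)| <= 1) ->
  (forall g y, U g (c y) = mu g *: c (U g y)) -> forall y, orbV y -> orbV (c y).
Proof.
move=> bc hmu hc y hy e e0.
have [K [K0 hK]] := bounded_pos bc.
have A0 : 0 <= K * (2 * n y + 4) by rewrite mulr_ge0 // addr_ge0 ?mulr_ge0 ?hnorm_ge0.
have [d0 [d1 dA]] := small_param e0 A0.
move: d0 d1 dA; set d := e / _ => d0 d1 dA.
have [L hL] := hy _ d0.
have [CL hCL] := grid_cplx d0.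
exists (List.flat_map (fun nu => List.map (fun l => nu *: c l) L) CL) => z [g ->].
have [l [Il hl]] := hL (U g y) (ex_intro _ g erefl).
have [m1 m2] := hmu g.
have [nu [Inu [h1 h2]]] := hCL (mu g) m1 m2.
exists (nu *: c l); split.
  by apply/List.in_flat_map; exists nu; split => //; apply/List.in_map_iff; exists l.
rewrite hc.
have -> : mu g *: c (U g y) - nu *: c l = (mu g - nu) *: c (U g y) + nu *: (c (U g y - l)).
  by rewrite (linB (bounded_lin bc)) scalerBl scalerBr addrA subrK.
apply: (le_lt_trans (hnormD _ _)).
have b1 : n ((mu g - nu) *: c (U g y)) <= (2 * d) * (K * n y).
  apply: (le_trans (hnormZle _ _)); apply: ler_pM.
  - by rewrite addr_ge0.
  - exact: hnorm_ge0.
  - move: h1 h2; move: `|Re (mu g - nu)| `|Im (mu g - nu)| => P Q; lra.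
  - by rewrite -(hnormU g y); exact: hK.
have b2 : n (nu *: c (U g y - l)) <= 4 * (K * d).
  apply: (le_trans (hnormZle _ _)); apply: ler_pM.
  - by rewrite addr_ge0.
  - exact: hnorm_ge0.
  - have r1 : `|Re nu| <= `|Re (mu g)| + `|Re (mu g - nu)|.
      have -> : Re nu = Re (mu g) - Re (mu g - nu).
        by rewrite ReD ReN; move: (Re (mu g)) (Re nu) => aa bb; ring.
      exact: ler_normB.
    have r2 : `|Im nu| <= `|Im (mu g)| + `|Im (mu g - nu)|.
      have -> : Im nu = Im (mu g) - Im (mu g - nu).
        by rewrite ImD ImN; move: (Im (mu g)) (Im nu) => aa bb; ring.
      exact: ler_normB.
    move: r1 r2 h1 h2 m1 m2 d1.
    move: `|Re nu| `|Im nu| `|Re (mu g - nu)| `|Im (mu g - nu)| `|Re (mu g)| `|Im (mu g)| => a b c1 c2 c3 c4.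
    lra.
  - apply: (le_trans (hK _)); rewrite ler_wpM2l // ltW //.
have E : 2 * d * (K * n y) + 4 * (K * d) = d * (K * (2 * n y + 4)).
  by move: (n y) (d) (K) => N D K'; ring.
apply: (le_lt_trans _ dA); rewrite -E; exact: lerD b1 b2.
Qed.

Lemma orbV_scale a x : orbV x -> orbV (a *: x).
Proof.
move=> hx; suff h : orbV (scale_op a id x) by exact: h.
apply: (@orbV_phase (scale_op a id) (fun _ => 1)) => //.
- exact: (bounded_scale a bounded_id).
- by move=> g; rewrite Re1 Im1 normr1 normr0 ler01.
- by move=> g y; rewrite /scale_op scale1r (linZ (bounded_lin (U_bounded g))).
Qed.

Lemma orbV_sub : closed_sub orbV.
Proof.
split.
- exact: orbV0.
- exact: orbV_add.
- exact: orbV_scale.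
- exact: orbV_closed.
Qed.

Lemma orbV_fixed x : (forall g, U g x = x) -> orbV x.
Proof.
move=> hx e e0; exists [:: x] => z [g ->]; exists x; split; first by left.
by rewrite hx subrr hnorm0.
Qed.

Lemma orbV_tb x : orbV x -> forall e : R, 0 < e -> exists s : seq G, forall g : G,
    exists h, List.In h s /\ n (U g x - U h x) < e.
Proof.
move=> hx e e0.
have e2 : 0 < e / 2 by rewrite divr_gt0.
have [L hL] := hx _ e2.
have claim : forall L' : seq H, exists s : seq G, forall l, List.In l L' ->
    (exists h, n (U h x - l) < e / 2) -> exists h, List.In h s /\ n (U h x - l) < e / 2.
  elim=> [|l L' [s hs]]; first by exists [::].
  have [[h0 hh0]|nex] := pselect (exists h, n (U h x - l) < e / 2).
    exists (h0 :: s) => l' [<-|Il'] hex; first by exists h0; split=> //; left.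
    by have [h [Ih hh]] := hs l' Il' hex; exists h; split=> //; right.
  exists s => l' [<-|Il'] hex; first by case: nex.
  exact: hs.
have [s hs] := claim L.
exists s => g.
have [l [Il hl]] := hL (U g x) (ex_intro _ g erefl).
have hg : exists h, n (U h x - l) < e / 2 by exists g.
have [h [Ih hh]] := hs l Il hg.
exists h; split=> //.
apply: (le_lt_trans (hnormDB _ l _)); rewrite (hnormB l).
move: hl hh; move: (n (U g x - l)) (n (U h x - l)) => A B; lra.
Qed.
End Orb.
Arguments U_bounded {G U}.
Arguments hnormU {G U}.
Arguments orbV_phase {G U}.
Arguments orbV_fixed {G U}.
Arguments orbV_tb {G U}.
Arguments orbV_sub {G}.


Lemma gen_star (B S0 : (H -> H) -> Prop) : star_subalg ip S0 -> (forall b, B b -> S0 b) ->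
  star_subalg ip (gen_star_alg ip B).
Proof.
move=> sS0 hB; split; last by move=> a Ca S sS hS; case: (sS) => _ /(_ _ (Ca S sS hS)).
split.
- by move=> a Ca; have := Ca S0 sS0 hB; case: sS0 => [[hb _ _ _ _] _]; exact: hb.
- by move=> S [[]].
- by move=> a b Ca Cb S sS hS; case: (sS) => [[_ _ hadd _ _] _]; apply: hadd; [exact: Ca|exact: Cb].
- by move=> c a Ca S sS hS; case: (sS) => [[_ _ _ hsc _] _]; apply: hsc; exact: Ca.
- by move=> a b Ca Cb S sS hS; case: (sS) => [[_ _ _ _ hc] _]; apply: hc; [exact: Ca|exact: Cb].
Qed.

Section Main.
Variables (G : groupType) (M : (H -> H) -> Prop) (Om : H) (U : G -> H -> H).
Hypothesis vnM : von_neumann ip M.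
Hypothesis sep : forall a, M a -> a Om = 0 -> a = @zero_op R H.
Hypothesis hU : forall g, unitary ip (U g).
Hypothesis UOm : forall g, U g Om = Om.
Hypothesis nOm : n Om = 1.

Let B := fun a => eigenoperator ip M U a \/ a = @zero_op R H.
Let C := gen_star_alg ip B.
Let N := commutant ip (commutant ip C).
Let Us g := adj ip (U g).

Lemma Us_bounded g : bounded_op ip (Us g).
Proof. exact: adj_bounded (U_bounded hU g). Qed.
Lemma Us_U g y : Us g (U g y) = y.
Proof.
apply: ip_inj_r => x; rewrite -(adjP (U_bounded hU g)).
by case: (hU g) => _ h _; rewrite h.
Qed.
Lemma U_Us g y : U g (Us g y) = y.
Proof. by case: (hU g) => _ _ /(_ y) [x <-]; rewrite Us_U. Qed.
Lemma Us_Om g : Us g Om = Om.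
Proof. by rewrite -{1}(UOm g) Us_U. Qed.

Lemma M_bounded a : M a -> bounded_op ip a.
Proof. by move=> /(proj1 (vnM.2 a)) []. Qed.

Lemma M_star : star_subalg ip M.
Proof.
have hM' : forall s, commutant ip M s -> bounded_op ip s by move=> s [].
have toM : forall a, commutant ip (commutant ip M) a -> M a by move=> a /(proj2 (vnM.2 a)).
have fromM : forall a, M a -> commutant ip (commutant ip M) a by move=> a /(proj1 (vnM.2 a)).
split; last exact: vnM.1.
split.
- exact: M_bounded.
- by apply: toM; apply: comm_zero.
- by move=> a b Ma Mb; apply: toM; apply: comm_add => //; apply: fromM.
- by move=> c a Ma; apply: toM; apply: comm_scale => //; apply: fromM.
- by move=> a b Ma Mb; apply: toM; apply: comm_comp => //; apply: fromM.
Qed.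

Lemma B_M b : B b -> M b.
Proof. by case=> [[]|->] //; case: M_star => [[_ h _ _ _] _]. Qed.
Lemma C_star : star_subalg ip C.
Proof. exact: (gen_star B M M_star B_M). Qed.
Lemma C_M c : C c -> M c.
Proof. by move=> Cc; apply: Cc; [exact: M_star|exact: B_M]. Qed.
Lemma B_C b : B b -> C b.
Proof. by move=> Bb S sS hS; apply: hS. Qed.
Lemma C_bounded c : C c -> bounded_op ip c.
Proof. by case: C_star => [[h _ _ _ _] _]; exact: h. Qed.
Lemma C_adj c : C c -> C (adj ip c).
Proof. by case: C_star => _ h; exact: h. Qed.

Lemma part1 a : N a -> M a.
Proof.
move=> Na; apply/(proj2 (vnM.2 a)); split; first exact: Na.1.
move=> s Ms; apply: Na.2; split; first exact: Ms.1.
by move=> c Cc; apply: Ms.2; exact: C_M.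
Qed.

Lemma part2 : star_subalg ip N.
Proof. exact: bicomm_star C_bounded C_adj. Qed.

Lemma alphaE g a x : alpha ip U g a x = U g (a (Us g x)).
Proof. by []. Qed.

Lemma abs_le1 (u : R) : u ^+ 2 <= 1 -> `|u| <= 1.
Proof.
move=> h; rewrite -(@ler_pXn2r _ 2) ?nnegrE ?normr_ge0 ?ler01 //.
by rewrite expr1n real_normK ?num_real.
Qed.

Lemma eig_rel {b lam} : (forall g, alpha ip U g b = scale_op (lam g) b) ->
  forall g y, U g (b y) = lam g *: b (U g y).
Proof.
move=> hb g y; have := congr1 (fun f => f (U g y)) (hb g).
by rewrite /= alphaE Us_U.
Qed.

Lemma eig_bound {b lam} : eigenoperator ip M U b -> (forall g, alpha ip U g b = scale_op (lam g) b) ->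
  forall g, `|Re (lam g)| <= 1 /\ `|Im (lam g)| <= 1.
Proof.
move=> [Mb [b0 _]] hb g.
have nb : n (b Om) != 0.
  by apply/eqP => /hnorm_eq0 e; apply: b0; apply: sep.
have := congr1 n (eig_rel hb g Om); rewrite hnormU // UOm hnormZ.
move=> e; have c1 : cm (lam g) = 1.
  by apply: (mulIf nb); rewrite mul1r -e.
have s1 : Re (lam g) ^+ 2 + Im (lam g) ^+ 2 = 1.
  by move: c1; rewrite /cm => e2; rewrite -[LHS]sqr_sqrtr ?addr_ge0 ?sqr_ge0 // e2 expr1n.
move: s1; move: (Re (lam g)) (Im (lam g)) => u v s1.
have hu : u ^+ 2 <= 1 by have := sqr_ge0 v; move: s1; move: (u ^+ 2) (v ^+ 2) => A Bq; lra.
have hv : v ^+ 2 <= 1 by have := sqr_ge0 u; move: s1; move: (u ^+ 2) (v ^+ 2) => A Bq; lra.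
by split; apply: abs_le1.
Qed.

Lemma eig_adj_rel {b lam} : bounded_op ip b -> (forall g, alpha ip U g b = scale_op (lam g) b) ->
  forall g y, U g (adj ip b y) = (lam g)^*%C *: adj ip b (U g y).
Proof.
move=> bb hb g y; apply: ip_inj_l => z.
have bU := U_bounded hU g.
rewrite (adjP bU) (adjP' bb).
have e : b (Us g z) = lam g *: Us g (b z).
  apply: (can_inj (Us_U g)) => //.
  by rewrite (eig_rel hb) U_Us (linZ (bounded_lin (U_bounded hU g))) U_Us.
by rewrite e ipZr -(adjP bU) -(adjP' bb) ipZl cjK.
Qed.

Lemma alpha_bounded g a : bounded_op ip a -> bounded_op ip (alpha ip U g a).
Proof.
by move=> ba; apply: bounded_comp; [apply: bounded_comp => //; exact: U_bounded hU g|exact: Us_bounded].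
Qed.
Lemma alpha_zero g : alpha ip U g (@zero_op R H) = @zero_op R H.
Proof. by apply: funE => x; rewrite alphaE /zero_op (lin0 (bounded_lin (U_bounded hU g))). Qed.
Lemma alpha_add g a b : alpha ip U g (add_op a b) = add_op (alpha ip U g a) (alpha ip U g b).
Proof. by apply: funE => x; rewrite !alphaE /add_op (linD (bounded_lin (U_bounded hU g))). Qed.
Lemma alpha_scale g c a : alpha ip U g (scale_op c a) = scale_op c (alpha ip U g a).
Proof. by apply: funE => x; rewrite !alphaE /scale_op (linZ (bounded_lin (U_bounded hU g))). Qed.
Lemma alpha_comp g a b : alpha ip U g (a \o b) = alpha ip U g a \o alpha ip U g b.
Proof. by apply: funE => x; rewrite /= !alphaE Us_U. Qed.
Lemma alpha_adj g a : bounded_op ip a -> adj ip (alpha ip U g a) = alpha ip U g (adj ip a).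
Proof.
move=> ba; apply: adj_unique; first exact: alpha_bounded.
move=> x y; rewrite !alphaE.
have bU := U_bounded hU g.
by rewrite (adjP bU) (adjP ba) -(adjP' bU).
Qed.

Lemma C_alpha g c : C c -> C (alpha ip U g c).
Proof.
pose S := fun c => C c /\ forall g, C (alpha ip U g c).
have [[Cb C0 Cadd Csc Ccomp] Cadj] := C_star.
have sS : star_subalg ip S.
  split; last first.
    move=> a [Ca hCa]; split; first exact: Cadj.
    by move=> h; rewrite -alpha_adj; [exact: Cadj|exact: Cb].
  split.
  - by move=> a [Ca _]; exact: Cb.
  - by split=> // h; rewrite alpha_zero.
  - by move=> a b [Ca hCa] [Cb' hCb]; split; [exact: Cadd|move=> h; rewrite alpha_add; exact: Cadd].
  - by move=> d a [Ca hCa]; split; [exact: Csc|move=> h; rewrite alpha_scale; exact: Csc].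
  - by move=> a b [Ca hCa] [Cb' hCb]; split; [exact: Ccomp|move=> h; rewrite alpha_comp; exact: Ccomp].
have hBS : forall b, B b -> S b.
  move=> b Bb; split; first exact: B_C.
  move=> h; case: Bb => [[Mb [b0 [lam hlam]]]|->]; last by rewrite alpha_zero.
  by rewrite hlam; apply: Csc; apply: B_C; left; split=> //; split=> //; exists lam.
by move=> Cc; have [] := Cc S sS hBS; move=> _; apply.
Qed.

Lemma part3 g a : N a -> N (alpha ip U g a).
Proof.
move=> Na; split; first by apply: alpha_bounded; exact: Na.1.
move=> s Cs.
have bU := U_bounded hU g; have bUs := Us_bounded g.
pose s' := Us g \o s \o U g.
have Cs' : commutant ip C s'.
  split; first by apply: bounded_comp => //; apply: bounded_comp => //; exact: Cs.1.
  move=> c Cc; apply: funE => x /=.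
  have e : U g (c x) = alpha ip U g c (U g x) by rewrite alphaE Us_U.
  by rewrite /s' /= e (commP Cs _ (C_alpha g _ Cc)) alphaE Us_U.
apply: funE => x /=; rewrite !alphaE.
have e1 : Us g (s x) = s' (Us g x) by rewrite /s' /= U_Us.
rewrite e1 (commP Na _ Cs') /s' /= U_Us.
by rewrite -[X in _ = s X](U_Us g) /= Us_U.
Qed.

Let V := @orbV G U.
Lemma V_sub : closed_sub V.
Proof. exact: orbV_sub U hU. Qed.

Lemma P_ex : exists P : H -> H, forall x, V (P x) /\ forall v, V v -> ip v (x - P x) = 0.
Proof. exact: (choice_fun _ _ _ (fun x => proj_ex _ V_sub x)). Qed.

Lemma part4 a : N a -> orbit_totally_bounded ip U Om a.
Proof.
move=> Na.
have [P hP] := P_ex.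
have [V0 VD VZ _] := V_sub.
have uniq : forall x p, V p -> (forall v, V v -> ip v (x - p) = 0) -> P x = p.
  move=> x p Vp hp; have [VPx hPx] := hP x.
  have Vd : V (P x - p) by apply: VD => //; rewrite -scaleN1r; apply: VZ.
  apply/eqP; rewrite -subr_eq0; apply/eqP; apply: q_eq0.
  have ed : P x - p = (x - p) - (x - P x) by rewrite opprB [RHS]addrC addrA subrK.
  by rewrite /q {2}ed ipBr hp // hPx // subrr Re0.
have Plin : linop P.
  move=> c x y; apply: uniq.
    by apply: VD; [apply: VZ; exact: (hP x).1|exact: (hP y).1].
  move=> v Vv.
  have -> : c *: x + y - (c *: P x + P y) = c *: (x - P x) + (y - P y).
    by rewrite scalerBr opprD addrACA.
  by rewrite ipDr ipZr (hP x).2 // (hP y).2 // mulr0 addr0.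
have bP : bounded_op ip P.
  split=> //; exists 1 => x; rewrite mul1r !hnormE; apply: ler_wsqrtr.
  have -> : q x = q (P x + (x - P x)) by rewrite addrC subrK.
  rewrite qD (hP x).2; last exact: (hP x).1.
  by rewrite Re0 mulr0 addr0 lerDl q_ge0.
pose Wp := fun c => bounded_op ip c /\ (forall x, V x -> V (c x)) /\ (forall x, V x -> V (adj ip c x)).
have sW : star_subalg ip Wp.
  split; last first.
    move=> c [bc [h1 h2]]; split; first exact: adj_bounded.
    by split=> // x Vx; rewrite adj_adj //; exact: h1.
  split.
  - by move=> c [].
  - split; first exact: bounded_zero.
    by rewrite adj_zero; split=> x _; rewrite /zero_op.
  - move=> c d [bc [c1 c2]] [bd [d1 d2]]; split; first exact: bounded_add.
    split=> x Vx.
      by rewrite /add_op; apply: VD; [exact: c1|exact: d1].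
    by rewrite adj_add // /add_op; apply: VD; [exact: c2|exact: d2].
  - move=> z c [bc [c1 c2]]; split; first exact: bounded_scale.
    split=> x Vx.
      by rewrite /scale_op; apply: VZ; exact: c1.
    by rewrite adj_scale // /scale_op; apply: VZ; exact: c2.
  - move=> c d [bc [c1 c2]] [bd [d1 d2]]; split; first exact: bounded_comp.
    split=> x Vx.
      by rewrite /=; apply: c1; apply: d1.
    by rewrite adj_comp // /=; apply: d2; apply: c2.
have BW : forall b, B b -> Wp b.
  move=> b [[Mb [b0 [lam hlam]]]|->]; last first.
    split; first exact: bounded_zero.
    by rewrite adj_zero; split=> x _; rewrite /zero_op.
  have bb := M_bounded _ Mb.
  have hb : eigenoperator ip M U b by split=> //; split=> //; exists lam.
  have hl := eig_bound hb hlam.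
  split=> //; split.
    exact: (orbV_phase hU b lam bb hl (eig_rel hlam)).
  apply: (orbV_phase hU (adj ip b) (fun g => (lam g)^*%C)).
  - exact: adj_bounded.
  - by move=> g; rewrite ReJ ImJ normrN; exact: hl.
  - exact: eig_adj_rel.
have CW : forall c, C c -> Wp c by move=> c Cc; exact: Cc Wp sW BW.
have PC : commutant ip C P.
  split=> // c Cc; apply: funE => x /=.
  have [bc [c1 c2]] := CW c Cc.
  apply: uniq; first by apply: c1; exact: (hP x).1.
  move=> v Vv; rewrite -(linB (bounded_lin bc)) -(adjP' bc).
  by apply: (hP x).2; exact: c2.
have VOm : V Om by apply: (orbV_fixed Om UOm).
have POm : P Om = Om by apply: uniq => // v _; rewrite subrr ip0r.
have Va : V (a Om).
  by rewrite -{1}POm (commP Na _ PC); exact: (hP _).1.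
move=> e e0; have [s hs] := orbV_tb (a Om) Va e e0.
exists s => g; have [h [Ih hh]] := hs g; exists h; split=> //.
by rewrite !alphaE !Us_Om.
Qed.


End Main.
End Hil.

Theorem proposition6p5 (R : realType) (H : lmodType R[i]) (ip : H -> H -> R[i])
    (G : groupType) (M : (H -> H) -> Prop) (Omega : H) (U : G -> H -> H) :
  represented_system ip M Omega U ->
  let B := fun a => eigenoperator ip M U a \/ a = zero_op (H := H) in
  let C := gen_star_alg ip B in
  let N := commutant ip (commutant ip C) in
  [/\ (forall a, N a -> M a),
      star_subalg ip N,
      (forall g a, N a -> N (alpha ip U g a)) &
      (forall a, N a -> orbit_totally_bounded ip U Omega a)].
Proof.
move=> [[hH vnM nOm cyc sep] [hU Umul U1 UOm Mal]] B C N.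
split.
- exact: (part1 R H ip hH G M U vnM).
- exact: (part2 R H ip hH G M U vnM).
- exact: (part3 R H ip hH G M U vnM hU).
- exact: (part4 R H ip hH G M Omega U vnM sep hU UOm).
Qed.
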